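(* Let $X$ be a real Banach space and let $(\Omega,\Sigma,\mu)$ be a $\sigma$-finite measure space with $\mu(\Omega)>0$. Then $X$ has the property $( ** )$ if and only if $L_\infty(\mu,X)$ has the property $( ** )$.
   Context: All Banach spaces are real. For a Banach space $Z$, $B_Z$, $S_Z$ and $Z^*$ denote its closed unit ball, unit sphere and dual. For $z^*\in S_{Z^*}$ and $0<\alpha<1$, the slice is $S(z^*,\alpha)=\{z\in B_Z: z^*(z)>1-\alpha\}$, and $-S(z^*,\alpha)=\{-z: z\in S(z^*,\alpha)\}$. A Banach space $Z$ has the property $( ** )$ if for all $z_1,z_2\in S_Z$ and every $\varepsilon>0$ there exists $z^*\in S_{Z^*}$ such that, writing $S=S(z^*,\varepsilon)$, one has $z_1\in S$ and $\operatorname{dist}(z_2,S)+\operatorname{dist}(z_2,-S)<2+\varepsilon$. $L_\infty(\mu,X)$ is the Banach space of (classes of) strongly measurable essentially bounded functions $\Omega\to X$ with the essential supremum norm $\|f\|_\infty=\operatorname{ess\,sup}_{t\in\Omega}\|f(t)\|$. *)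

(* Defs.v *)
From HB Require Import structures.
From mathcomp Require Import all_boot all_order all_algebra.
From mathcomp Require Import all_classical all_reals all_analysis.
Set Implicit Arguments. Unset Strict Implicit. Unset Printing Implicit Defensive.
Import Order.TTheory GRing.Theory Num.Theory.
Import numFieldNormedType.Exports.
Local Open Scope classical_set_scope.
Local Open Scope ring_scope.

Section Star.
Variable R : realType.
(* A (semi)normed space is given as a subset [dom] of an ambient real vector
   space [V] (closed under the vector operations in our uses), with a
   (semi)norm [nrm] on it. *)
Variables (V : lmodType R) (dom : set V) (nrm : V -> R).

Definition lin_on (phi : V -> R) :=
  forall (a b : R) (x y : V), dom x -> dom y ->
    phi (a *: x + b *: y) = a * phi x + b * phi y.

Definition bounded_on (phi : V -> R) :=
  exists C : R, forall x, dom x -> `|phi x| <= C * nrm x.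

Definition dual_norm (phi : V -> R) : R :=
  sup [set `|phi x| | x in [set x | dom x /\ nrm x <= 1]].

Definition dual_sphere (phi : V -> R) :=
  [/\ lin_on phi, bounded_on phi & dual_norm phi = 1].

Definition slice (phi : V -> R) (a : R) : set V :=
  [set z | [/\ dom z, nrm z <= 1 & 1 - a < phi z]].

Definition nslice (phi : V -> R) (a : R) : set V :=
  [set - z | z in slice phi a].

Definition dist (z : V) (S : set V) : R :=
  inf [set nrm (z - s) | s in S].

Definition star2 : Prop :=
  forall z1 z2 : V, dom z1 -> dom z2 -> nrm z1 = 1 -> nrm z2 = 1 ->
  forall eps : R, 0 < eps ->
  exists phi : V -> R, [/\ dual_sphere phi, slice phi eps z1 &
     dist z2 (slice phi eps) + dist z2 (nslice phi eps) < 2 + eps].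
End Star.

Definition star2_normed (R : realType) (X : normedModType R) : Prop :=
  @star2 R X setT (fun x : X => `|x|).

Section Linfty.
Variables (d : measure_display) (T : measurableType d) (R : realType)
  (mu : {measure set T -> \bar R}) (X : normedModType R).

Definition simple_fun (g : T -> X) :=
  finite_set (range g) /\ forall x : X, measurable (g @^-1` [set x]).

Definition strongly_measurable (f : T -> X) :=
  exists g : nat -> T -> X, (forall n, simple_fun (g n)) /\
    {ae mu, forall t, (fun n => g n t) @ \oo --> f t}.

Definition ess_bounded (f : T -> X) :=
  exists M : R, {ae mu, forall t, `|f t| <= M}.

Definition Linfty_dom : set (T -> X) :=
  [set f | strongly_measurable f /\ ess_bounded f].

Definition ess_norm (f : T -> X) : R :=
  inf [set M : R | 0 <= M /\ {ae mu, forall t, `|f t| <= M}].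

(* L_infty(mu, X) has ( ** ): stated on representatives, with the
   ess-sup seminorm (equivalent to the quotient) *)
Definition star2_Linfty : Prop :=
  @star2 R (T -> X) Linfty_dom ess_norm.
End Linfty.

(* Main.v *)
Require Import Defs.
From HB Require Import structures.
From mathcomp Require Import all_boot all_order all_algebra.
From mathcomp Require Import all_classical all_reals all_analysis.
From mathcomp Require Import ring lra.
Import Order.TTheory GRing.Theory Num.Theory.
Import numFieldNormedType.Exports.
Local Open Scope classical_set_scope.
Local Open Scope ring_scope.
Set Implicit Arguments. Unset Strict Implicit. Unset Printing Implicit Defensive.
Definition Pgr (R : realType) (V : lmodType R) (D : set V) (p : V -> R) (x0 : V)
  (G : set (V * R)) : Prop :=
  [/\ (forall x r s, G (x, r) -> G (x, s) -> r = s),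
      (forall x r, G (x, r) -> D x /\ r <= p x),
      (forall a b x y r s, G (x, r) -> G (y, s) -> G (a *: x + b *: y, a * r + b * s)) &
      (G = set0 \/ G (x0, p x0))].

Lemma p_ge0 (R : realType) (V : lmodType R) (D : set V) (p : V -> R)
  (DL : forall a b x y, D x -> D y -> D (a *: x + b *: y))
  (psub : forall x y, D x -> D y -> p (x + y) <= p x + p y)
  (phom : forall a x, D x -> p (a *: x) = `|a| * p x) x :
  D x -> 0 <= p x.
Proof.
move=> Dx.
have D1 : D (- x) by have := DL (-1) 0 x x Dx Dx; rewrite scale0r addr0 scaleN1r.
have := psub x (- x) Dx D1; rewrite subrr.
have -> : p 0 = 0 by rewrite -(scale0r x) phom // normr0 mul0r.
have -> : p (- x) = p x by rewrite -scaleN1r phom // normrN normr1 mul1r.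
move=> h; lra.
Qed.

Lemma hahn_banach (R : realType) (V : lmodType R) (D : set V) (p : V -> R)
  (DL : forall a b x y, D x -> D y -> D (a *: x + b *: y))
  (psub : forall x y, D x -> D y -> p (x + y) <= p x + p y)
  (phom : forall a x, D x -> p (a *: x) = `|a| * p x) (x0 : V) :
  D x0 -> exists phi : V -> R,
    [/\ (forall a b x y, D x -> D y -> phi (a *: x + b *: y) = a * phi x + b * phi y),
        (forall x, D x -> `|phi x| <= p x) & phi x0 = p x0].
Proof.
move=> Dx0.
have pge0 := p_ge0 DL psub phom.
have DN x : D x -> D (- x).
  by move=> Dx; have := DL (-1) 0 x x Dx Dx; rewrite scale0r addr0 scaleN1r.
have DD x y : D x -> D y -> D (x + y).
  by move=> Dx Dy; have := DL 1 1 x y Dx Dy; rewrite !scale1r.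
have DZ a x : D x -> D (a *: x).
  by move=> Dx; have := DL a 0 x x Dx Dx; rewrite scale0r addr0.
have [A [PA Amax]] : exists A, Pgr D p x0 A /\ forall B, A `<` B -> ~ Pgr D p x0 B.
  apply: Zorn_bigcup => F FP Ftot; split.
  - move=> x r s [G1 FG1 G1x] [G2 FG2 G2x].
    have [G12|G21] := Ftot _ _ FG1 FG2.
      by have [fun2 _ _ _] := FP _ FG2; apply: (fun2 x); [apply: G12|].
    by have [fun1 _ _ _] := FP _ FG1; apply: (fun1 x); [|apply: G21].
  - by move=> x r [G FG Gx]; have [_ h _ _] := FP _ FG; exact: h.
  - move=> a b x y r s [G1 FG1 G1x] [G2 FG2 G2x].
    have [G12|G21] := Ftot _ _ FG1 FG2.
      have [_ _ h _] := FP _ FG2; exists G2 => //; apply: h => //; exact: G12.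
    have [_ _ h _] := FP _ FG1; exists G1 => //; apply: h => //; exact: G21.
  - have [[q [G FG Gq]]|nq] := pselect (exists q, (\bigcup_(X in F) X) q); last first.
      left; rewrite predeqE => q; split => // Uq; exfalso; apply: nq; by exists q.
    right; exists G => //; have [_ _ _ [G0|//]] := FP _ FG.
    by move: Gq; rewrite G0.
have [Afun Abd Alin Ax0] := PA.
have A0 : A (x0, p x0).
  case: Ax0 => // A0.
  pose B0 := [set q : V * R | exists t : R, q = (t *: x0, t * p x0)].
  exfalso; apply: (Amax B0).
    rewrite A0; split; first by [].
    by move=> /(_ (x0, p x0)); apply; exists 1; rewrite scale1r mul1r.
  split.
  - move=> x r s [t [-> ->]] [u [tu ->]].
    have : (t - u) *: x0 = 0 by rewrite scalerBl tu subrr.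
    move/eqP; rewrite scaler_eq0 subr_eq0 => /orP[/eqP -> //|/eqP x00].
    have p00 : p x0 = 0 by rewrite x00 -(scale0r (0 : V)) phom ?normr0 ?mul0r // -x00.
    by rewrite p00 !mulr0.
  - move=> x r [t [-> ->]]; split; first exact: DZ.
    rewrite phom // ler_wpM2r //; first exact: pge0.
    exact: ler_norm.
  - move=> a b x y r s [t [-> ->]] [u [-> ->]].
    by exists (a * t + b * u); rewrite !scalerA scalerDl !mulrA mulrDl.
  - by right; exists 1; rewrite scale1r mul1r.
have Aneg x r : A (x, r) -> A (- x, - r).
  by move=> Axr; have := Alin (-1) 0 x x r r Axr Axr;
    rewrite scale0r addr0 scaleN1r mul0r addr0 mulN1r.
have Asc a x r : A (x, r) -> A (a *: x, a * r).
  by move=> Axr; have := Alin a 0 x x r r Axr Axr; rewrite scale0r addr0 mul0r addr0.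
have Aadd x y r s : A (x, r) -> A (y, s) -> A (x + y, r + s).
  by move=> Axr Ays; have := Alin 1 1 x y r s Axr Ays; rewrite !scale1r !mul1r.
have Atot z : D z -> exists r, A (z, r).
  move=> Dz; apply/not_existsP => Anz.
  pose S := [set q.2 - p (q.1 - z) | q in A].
  pose c := sup S.
  have key x r y s : A (x, r) -> A (y, s) -> r - p (x - z) <= p (y + z) - s.
    move=> Axr Ays; have [Dx _] := Abd _ _ Axr; have [Dy _] := Abd _ _ Ays.
    have [_ h] := Abd _ _ (Aadd _ _ _ _ Axr Ays).
    rewrite lerBlDr addrAC lerBrDr; apply: (le_trans h).
    have -> : x + y = (x - z) + (y + z) by rewrite addrACA addNr addr0.
    by rewrite addrC; apply: psub; [apply: DD => //; exact: DN|exact: DD].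
  have Sne : S !=set0 by exists (p x0 - p (x0 - z)); exists (x0, p x0).
  have Sub : ubound S (p (x0 + z) - p x0).
    by move=> _ [[x r] Axr <-]; exact: key.
  have cub x r : A (x, r) -> r - p (x - z) <= c.
    move=> Axr; apply: ub_le_sup; first by exists (p (x0 + z) - p x0).
    by exists (x, r).
  have clb y s : A (y, s) -> c <= p (y + z) - s.
    by move=> Ays; apply: ge_sup => // _ [[x r] Axr <-]; exact: key.
  pose B := [set q : V * R | exists x r t, A (x, r) /\ q = (x + t *: z, r + t * c)].
  apply: (Amax B).
    split.
      by move=> [x r] Axr; exists x, r, 0; rewrite scale0r mul0r !addr0.
    move=> /(_ (0 + 1 *: z, 0 + 1 * c)) BA.
    have : A (0 + 1 *: z, 0 + 1 * c).
      apply: BA; exists 0, 0, 1; split => //.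
      by have := Asc 0 _ _ A0; rewrite scale0r mul0r.
    by rewrite add0r scale1r => Az; apply: (Anz (0 + 1 * c)).
  split.
  - move=> q r s [x [r1 [t [Axr1 [-> ->]]]]] [y [s1 [u [Ays1 [eq1 ->]]]]].
    have [tu|ntu] := eqVneq t u.
      rewrite tu in eq1 *; move/addIr: eq1 => eq1; rewrite eq1 in Axr1.
      by rewrite (Afun _ _ _ Axr1 Ays1).
    exfalso; apply: (Anz ((t - u)^-1 * (s1 - r1))).
    have -> : z = (t - u)^-1 *: (y - x).
      have : (t - u) *: z = y - x.
        by rewrite scalerBl; apply/eqP; rewrite subr_eq addrAC -eq1 addrAC subrr add0r.
      move=> <-; rewrite scalerA mulVf ?scale1r //.
      by rewrite subr_eq0.
    apply: Asc; apply: Aadd => //; exact: Aneg.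
  - move=> q r [x [r1 [t [Axr1 [-> ->]]]]].
    have [Dx _] := Abd _ _ Axr1.
    split; first by apply: DD => //; exact: DZ.
    have [t0|t0|->] := ltgtP t 0; last first.
    + by rewrite scale0r mul0r !addr0; have [_ ] := Abd _ _ Axr1.
    +
      have h := clb _ _ (Asc t^-1 _ _ Axr1).
      have -> : x + t *: z = t *: (t^-1 *: x + z).
        by rewrite scalerDr scalerA mulfV ?scale1r // gt_eqF.
      rewrite phom; last by apply: DD => //; exact: DZ.
      rewrite gtr0_norm //.
      have h2 := ler_wpM2l (ltW t0) h.
      rewrite mulrBr mulrA mulfV ?gt_eqF // mul1r in h2.
      lra.
    +
      have s0 : 0 < - t by rewrite oppr_gt0.
      have h := cub _ _ (Asc (- t)^-1 _ _ Axr1).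
      have -> : x + t *: z = (- t) *: ((- t)^-1 *: x - z).
        rewrite scalerBr scalerA mulfV ?scale1r ?gt_eqF //.
        by rewrite scaleNr opprK.
      rewrite phom; last by apply: DD; [exact: DZ|exact: DN].
      rewrite gtr0_norm //.
      have h2 : (-t)^-1 * r1 - c <= p ((- t)^-1 *: x - z).
        by rewrite lerBlDr addrC -lerBlDr.
      have := ler_wpM2l (ltW s0) h2.
      rewrite mulrBr mulrA mulfV ?gt_eqF // mul1r.
      lra.
  - move=> a b q1 q2 r s [x [r1 [t [Axr1 [-> ->]]]]] [y [s1 [u [Ays1 [-> ->]]]]].
    exists (a *: x + b *: y), (a * r1 + b * s1), (a * t + b * u); split.
      exact: Alin.
    congr pair.
      by rewrite !scalerDr scalerDl !scalerA addrACA.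
    by rewrite !mulrDr mulrDl !mulrA addrACA.
  - right; exists x0, (p x0), 0; split => //.
    by rewrite scale0r mul0r !addr0.
pose phi z := xget 0 [set r | A (z, r)].
have Aphi z : D z -> A (z, phi z) by move=> Dz; exact: (xgetPex 0 (Atot z Dz)).
exists phi; split.
- move=> a b x y Dx Dy.
  apply: (Afun (a *: x + b *: y)); first exact/Aphi/DL.
  exact: Alin (Aphi _ Dx) (Aphi _ Dy).
- move=> x Dx; rewrite ler_norml; apply/andP; split.
    have [_] := Abd _ _ (Aneg _ _ (Aphi _ Dx)).
    by rewrite -scaleN1r phom // normrN normr1 mul1r lerNl.
  by have [_] := Abd _ _ (Aphi _ Dx).
- by apply: (Afun x0); [exact: Aphi|].
Qed.
Lemma lin_scale (R : realType) (V : lmodType R) (D : set V) (phi : V -> R) a x :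
  lin_on D phi -> D x -> phi (a *: x) = a * phi x.
Proof. by move=> hl Dx; have := hl a 0 x x Dx Dx; rewrite scale0r addr0 mul0r addr0. Qed.

Lemma mk_sphere (R : realType) (V : lmodType R) (D : set V) (p : V -> R) (phi : V -> R) (x0 : V)
  (DZ : forall a x, D x -> D (a *: x))
  (phom : forall a x, D x -> p (a *: x) = `|a| * p x) :
  lin_on D phi -> (forall x, D x -> `|phi x| <= p x) -> D x0 -> 0 < p x0 -> phi x0 = p x0 ->
  dual_sphere D p phi.
Proof.
move=> hl hb Dx0 px0 phx0; split => //.
  by exists 1 => x Dx; rewrite mul1r; exact: hb.
have y0 : [set `|phi x| | x in [set x | D x /\ p x <= 1]] 1.
  exists ((p x0)^-1 *: x0).
    split; first exact: DZ.
    by rewrite phom // normfV gtr0_norm // mulVf ?gt_eqF.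
  by rewrite (lin_scale _ hl Dx0) phx0 mulVf ?gt_eqF // normr1.
apply/le_anti/andP; split.
  apply: ge_sup; first by exists 1.
  by move=> _ [x [Dx px1] <-]; apply: le_trans px1; exact: hb.
apply: ub_le_sup => //; exists 1.
by move=> _ [x [Dx px1] <-]; apply: le_trans px1; exact: hb.
Qed.

Lemma sphere_le (R : realType) (V : lmodType R) (D : set V) (p : V -> R) (phi : V -> R)
  (DZ : forall a x, D x -> D (a *: x))
  (phom : forall a x, D x -> p (a *: x) = `|a| * p x)
  (pge0 : forall x, D x -> 0 <= p x) :
  dual_sphere D p phi -> forall x, D x -> `|phi x| <= p x.
Proof.
move=> [hl [C hC] hn] x Dx.
have [px0|px0] := eqVneq (p x) 0.
  by have := hC x Dx; rewrite px0 mulr0.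
have pxp : 0 < p x by rewrite lt_neqAle eq_sym px0 pge0.
have ub : ubound [set `|phi x| | x in [set x | D x /\ p x <= 1]] `|C|.
  move=> _ [y [Dy py1] <-]; apply: (le_trans (hC y Dy)).
  have := pge0 y Dy => py0.
  have := ler_norm C; have := normr_ge0 C; nra.
have : `|phi ((p x)^-1 *: x)| <= 1.
  rewrite -hn; apply: ub_le_sup; first by exists `|C|.
  exists ((p x)^-1 *: x) => //; split; first exact: DZ.
  by rewrite phom // normfV gtr0_norm // mulVf.
rewrite (lin_scale _ hl Dx) normrM normfV (gtr0_norm pxp) => h.
have -> : `|phi x| = p x * ((p x)^-1 * `|phi x|) by rewrite mulrA mulfV ?mul1r // gt_eqF.
nra.
Qed.

Lemma dist_le (R : realType) (V : lmodType R) (nrm : V -> R) z (S : set V) s :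
  (forall s, S s -> 0 <= nrm (z - s)) -> S s -> dist nrm z S <= nrm (z - s).
Proof.
move=> h Ss; apply: ge_inf; last by exists s.
by exists 0 => _ [y Sy <-]; exact: h.
Qed.

Lemma dist_lt (R : realType) (V : lmodType R) (nrm : V -> R) z (S : set V) a :
  S !=set0 -> dist nrm z S < a -> exists2 s, S s & nrm (z - s) < a.
Proof.
move=> [s Ss] /inf_lt [].
  by exists (nrm (z - s)); exists s.
by move=> _ [y Sy <-] h; exists y.
Qed.
Lemma aeE d (T : measurableType d) (R : realType) (mu : {measure set T -> \bar R}) (P : T -> Prop) :
  {ae mu, forall t, P t} <-> mu.-negligible (~` [set t | P t]).
Proof. by []. Qed.

Lemma ae_imp d (T : measurableType d) (R : realType) (mu : {measure set T -> \bar R}) (P Q : T -> Prop) :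
  {ae mu, forall t, P t} -> (forall t, P t -> Q t) -> {ae mu, forall t, Q t}.
Proof.
move=> /aeE h PQ; apply/aeE; apply: negligibleS h => t /= nQ Pt; exact/nQ/PQ.
Qed.

Lemma ae_and d (T : measurableType d) (R : realType) (mu : {measure set T -> \bar R}) (P Q : T -> Prop) :
  {ae mu, forall t, P t} -> {ae mu, forall t, Q t} -> {ae mu, forall t, P t /\ Q t}.
Proof.
move=> /aeE hP /aeE hQ; apply/aeE; apply: negligibleS (negligibleU hP hQ).
by move=> t /= /not_andP [] h; [left|right].
Qed.

Lemma ae_ex d (T : measurableType d) (R : realType) (mu : {measure set T -> \bar R}) (P Q : T -> Prop) :
  ~ {ae mu, forall t, P t} -> {ae mu, forall t, Q t} -> exists t, ~ P t /\ Q t.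
Proof.
move=> nP hQ; apply/not_existsP => h; apply: nP; apply: (ae_imp hQ) => t Qt.
by apply/not_notP => nPt; apply: (h t).
Qed.

Lemma ess_norm_ge0 d (T : measurableType d) (R : realType) (mu : {measure set T -> \bar R})
  (X : normedModType R) (f : T -> X) : 0 <= ess_norm mu f.
Proof.
rewrite /ess_norm.
have [[M SM]|nS] := pselect (exists M, [set M : R | 0 <= M /\ {ae mu, forall t, `|f t| <= M}] M).
  by apply: lb_le_inf; [exists M|move=> y [] ].
have -> : [set M : R | 0 <= M /\ {ae mu, forall t, `|f t| <= M}] = set0.
  by rewrite predeqE => M; split => // SM; apply: nS; exists M.
by rewrite inf0.
Qed.

Lemma ess_norm_le d (T : measurableType d) (R : realType) (mu : {measure set T -> \bar R})
  (X : normedModType R) (f : T -> X) (M : R) :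
  0 <= M -> {ae mu, forall t, `|f t| <= M} -> ess_norm mu f <= M.
Proof.
move=> M0 hM; apply: ge_inf; last by split.
by exists 0 => y [].
Qed.

Lemma ess_norm_lt d (T : measurableType d) (R : realType) (mu : {measure set T -> \bar R})
  (X : normedModType R) (f : T -> X) (M : R) :
  ess_bounded mu f -> ess_norm mu f < M -> {ae mu, forall t, `|f t| < M}.
Proof.
move=> [M0 h0] /inf_lt [].
  exists (Num.max M0 0); split; first by rewrite le_max lexx orbT.
  by apply: (ae_imp h0) => t h; rewrite le_max h.
move=> M' [_ hM'] M'M; apply: (ae_imp hM') => t h; exact: le_lt_trans h M'M.
Qed.

Lemma ess_norm_gt d (T : measurableType d) (R : realType) (mu : {measure set T -> \bar R})
  (X : normedModType R) (f : T -> X) (M : R) :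
  0 <= M -> M < ess_norm mu f -> ~ {ae mu, forall t, `|f t| <= M}.
Proof.
move=> M0 Mlt hM.
by have := ess_norm_le M0 hM; rewrite leNgt Mlt.
Qed.

Lemma ess_bounded_lin d (T : measurableType d) (R : realType) (mu : {measure set T -> \bar R})
  (X : normedModType R) (f g : T -> X) (a b : R) :
  ess_bounded mu f -> ess_bounded mu g -> ess_bounded mu (a *: f + b *: g).
Proof.
move=> [M hM] [N hN]; exists (`|a| * M + `|b| * N).
apply: (ae_imp (ae_and hM hN)) => t [hf hg] /=.
apply: (le_trans (ler_normD _ _)); rewrite !normrZ.
by apply: lerD; apply: ler_wpM2l.
Qed.

Lemma ess_norm_add d (T : measurableType d) (R : realType) (mu : {measure set T -> \bar R})
  (X : normedModType R) (f g : T -> X) :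
  ess_bounded mu f -> ess_bounded mu g ->
  ess_norm mu (f + g) <= ess_norm mu f + ess_norm mu g.
Proof.
move=> bf bg; apply/ler_addgt0Pr => e e0.
have e2 : 0 < e / 2 by rewrite divr_gt0.
have hf : {ae mu, forall t, `|f t| < ess_norm mu f + e/2} by apply: ess_norm_lt => //; rewrite ltrDl.
have hg : {ae mu, forall t, `|g t| < ess_norm mu g + e/2} by apply: ess_norm_lt => //; rewrite ltrDl.
have := ess_norm_ge0 mu f; have := ess_norm_ge0 mu g => g0 f0.
have -> : ess_norm mu f + ess_norm mu g + e =
   (ess_norm mu f + e / 2) + (ess_norm mu g + e / 2) by field.
apply: ess_norm_le; first by lra.
apply: (ae_imp (ae_and hf hg)) => t [h1 h2] /=.
apply: (le_trans (ler_normD _ _)); lra.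
Qed.

Lemma ess_norm_scale_le d (T : measurableType d) (R : realType) (mu : {measure set T -> \bar R})
  (X : normedModType R) (f : T -> X) (a : R) :
  ess_bounded mu f -> ess_norm mu (a *: f) <= `|a| * ess_norm mu f.
Proof.
move=> bf; apply/ler_addgt0Pr => e e0.
have a1 : 0 < `|a| + 1 by have := normr_ge0 a; lra.
have e1 : 0 < e / (`|a| + 1) by rewrite divr_gt0.
have hf : {ae mu, forall t, `|f t| < ess_norm mu f + e / (`|a| + 1)} by apply: ess_norm_lt => //; rewrite ltrDl.
have f0 := ess_norm_ge0 mu f.
have a0 : 0 <= `|a| by [].
have le1 : `|a| * (e / (`|a| + 1)) <= e.
  rewrite mulrA ler_pdivrMr //; nra.
apply: (@le_trans _ _ (`|a| * (ess_norm mu f + e / (`|a| + 1)))).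
  apply: ess_norm_le; first by apply: mulr_ge0 => //; apply: addr_ge0 => //; exact: ltW.
  apply: (ae_imp hf) => t h /=; rewrite normrZ; apply: ler_wpM2l => //; exact: ltW.
by rewrite mulrDr lerD2l.
Qed.

Lemma ess_norm_scale d (T : measurableType d) (R : realType) (mu : {measure set T -> \bar R})
  (X : normedModType R) (f : T -> X) (a : R) :
  ess_bounded mu f -> ess_norm mu (a *: f) = `|a| * ess_norm mu f.
Proof.
move=> bf; apply/le_anti; rewrite ess_norm_scale_le //=.
have [->|a0] := eqVneq a 0.
  by rewrite normr0 mul0r ess_norm_ge0.
have bf' : ess_bounded mu (a *: f).
  by have := ess_bounded_lin a 0 bf bf; rewrite scale0r addr0.
have := ess_norm_scale_le a^-1 bf'; rewrite scalerA mulVf // scale1r.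
rewrite normfV => h.
rewrite -(ler_pM2l (_ : 0 < `|a|^-1)); last by rewrite invr_gt0 normr_gt0.
by rewrite mulrA mulVf ?mul1r // normr_eq0.
Qed.

Lemma ess_norm_cst d (T : measurableType d) (R : realType) (mu : {measure set T -> \bar R})
  (X : normedModType R) (x : X) :
  (0 < mu setT)%E -> ess_norm mu (fun _ => x) = `|x|.
Proof.
move=> mu0; apply/le_anti/andP; split.
  by apply: ess_norm_le => //; apply: aeW => t.
rewrite leNgt; apply/negP => lt.
have bx : ess_bounded mu (fun _ => x) by exists `|x|; exact: aeW.
have /aeE := ess_norm_lt bx lt.
have -> : ~` [set t : T | `|x| < `|x|] = setT.
  by rewrite predeqE => t; rewrite ltxx; split.
move/(measure_negligible measurableT) => h.
by move: mu0; rewrite h ltxx.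
Qed.
Definition pw (T : Type) (X : Type) (C : set T) (y : X) (f : T -> X) : T -> X :=
  fun t => if `[< C t >] then y else f t.

Lemma simple_pre d (T : measurableType d) (R : realType) (X : normedModType R)
  (g : T -> X) (S : set X) : simple_fun g -> measurable (g @^-1` S).
Proof.
move=> [fin mg].
have -> : g @^-1` S = \bigcup_(x in range g `&` S) g @^-1` [set x].
  rewrite predeqE => t; split.
    by move=> St; exists (g t) => //; split => //; exists t.
  by move=> [x [_ Sx] /= ->].
by apply: fin_bigcup_measurable => //; exact: finite_setIl.
Qed.

Lemma simple_lin d (T : measurableType d) (R : realType) (X : normedModType R)
  (g h : T -> X) (a b : R) : simple_fun g -> simple_fun h -> simple_fun (a *: g + b *: h).
Proof.
move=> sg sh; have [fg _] := sg; have [fh _] := sh; split.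
  exact: (finite_image11 (fun u v => a *: u + b *: v) fg fh).
move=> x.
have -> : (a *: g + b *: h) @^-1` [set x] =
    \bigcup_(u in range g) (g @^-1` [set u] `&` h @^-1` [set v | a *: u + b *: v = x]).
  rewrite predeqE => t; split.
    by move=> /= <-; exists (g t); [exists t|].
  by move=> [u _ [/= <- /= <-]].
apply: fin_bigcup_measurable => // u _.
by apply: measurableI; apply: simple_pre.
Qed.

Lemma simple_cst d (T : measurableType d) (R : realType) (X : normedModType R)
  (y : X) : simple_fun (fun _ : T => y).
Proof.
split; first exact: finite_image_cst.
move=> x; have [->|nxy] := eqVneq y x.
  have -> : (fun _ : T => x) @^-1` [set x] = setT by rewrite predeqE.
  exact: measurableT.
have -> : (fun _ : T => y) @^-1` [set x] = set0.
  by rewrite predeqE => t; split => // /= yx; move: nxy; rewrite yx eqxx.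
exact: measurable0.
Qed.

Lemma simple_pw d (T : measurableType d) (R : realType) (X : normedModType R)
  (C : set T) (y : X) (g : T -> X) : measurable C -> simple_fun g -> simple_fun (pw C y g).
Proof.
move=> mC [fg mg]; split.
  apply: (@sub_finite_set _ _ ([set y] `|` range g)); last first.
    by rewrite finite_setU; split => //; exact: finite_set1.
  by move=> _ [t _ <-]; rewrite /pw; case: asboolP => _; [left|right; exists t].
move=> x.
have -> : pw C y g @^-1` [set x] = (C `&` [set _ | y = x]) `|` (~` C `&` g @^-1` [set x]).
  rewrite predeqE => t; rewrite /pw /=; case: asboolP => Ct; split.
  - by move=> ->; left.
  - by case=> [[]//|[]].
  - by move=> h; right.
  - by case=> [[]//|[]].
apply: measurableU; apply: measurableI => //.
  have [->|nxy] := pselect (y = x).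
    by have -> : [set _ : T | x = x] = setT by rewrite predeqE.
  by have -> : [set _ : T | y = x] = set0 by rewrite predeqE.
exact: measurableC.
Qed.

Lemma sm_lin d (T : measurableType d) (R : realType) (mu : {measure set T -> \bar R})
  (X : normedModType R) (f g : T -> X) (a b : R) :
  strongly_measurable mu f -> strongly_measurable mu g ->
  strongly_measurable mu (a *: f + b *: g).
Proof.
move=> [u [su cu]] [v [sv cv]].
exists (fun n => a *: u n + b *: v n); split.
  by move=> n; apply: simple_lin.
apply: (ae_imp (ae_and cu cv)) => t [h1 h2] /=.
apply: cvgD; apply: cvgZ => //; exact: cvg_cst.
Qed.

Lemma sm_cst d (T : measurableType d) (R : realType) (mu : {measure set T -> \bar R})
  (X : normedModType R) (y : X) : strongly_measurable mu (fun _ => y).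
Proof.
exists (fun _ _ => y); split; first by move=> n; exact: simple_cst.
by apply: aeW => t; exact: cvg_cst.
Qed.

Lemma sm_pw d (T : measurableType d) (R : realType) (mu : {measure set T -> \bar R})
  (X : normedModType R) (C : set T) (y : X) (f : T -> X) :
  measurable C -> strongly_measurable mu f -> strongly_measurable mu (pw C y f).
Proof.
move=> mC [u [su cu]].
exists (fun n => pw C y (u n)); split; first by move=> n; exact: simple_pw.
apply: (ae_imp cu) => t h; rewrite /pw; case: asboolP => _ //; exact: cvg_cst.
Qed.

Lemma dom_lin d (T : measurableType d) (R : realType) (mu : {measure set T -> \bar R})
  (X : normedModType R) (a b : R) (f g : T -> X) :
  Linfty_dom mu f -> Linfty_dom mu g -> Linfty_dom mu (a *: f + b *: g).
Proof.
move=> [sf bf] [sg bg]; split; first exact: sm_lin.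
exact: ess_bounded_lin.
Qed.

Lemma dom_cst d (T : measurableType d) (R : realType) (mu : {measure set T -> \bar R})
  (X : normedModType R) (y : X) : Linfty_dom mu (fun _ => y).
Proof. by split; [exact: sm_cst|exists `|y|; exact: aeW]. Qed.

Lemma dom_pw d (T : measurableType d) (R : realType) (mu : {measure set T -> \bar R})
  (X : normedModType R) (C : set T) (y : X) (f : T -> X) :
  measurable C -> Linfty_dom mu f -> Linfty_dom mu (pw C y f).
Proof.
move=> mC [sf [M bf]]; split; first exact: sm_pw.
exists (Num.max `|y| M); apply: (ae_imp bf) => t h; rewrite /pw.
by case: asboolP => _; rewrite le_max ?lexx ?h ?orbT.
Qed.
Lemma cvg_ev (R : realType) (X : normedModType R) (u : nat -> X) (l : X) (r : R) :
  u n @[n --> \oo] --> l -> 0 < r -> exists N, forall m, (N <= m)%N -> `|l - u m| < r.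
Proof. by move=> /cvgrPdist_lt h r0; have [N _ HN] := h r r0; exists N. Qed.

Lemma lim_ball (R : realType) (X : normedModType R) (u : nat -> X) (l p : X) (r : R) n :
  u m @[m --> \oo] --> l -> (forall m, (n <= m)%N -> `|u m - p| < r) -> `|l - p| <= r.
Proof.
move=> cu hu; rewrite leNgt; apply/negP => lt.
have s0 : 0 < `|l - p| - r by rewrite subr_gt0.
have [N HN] := cvg_ev cu s0.
have h1 := HN (maxn N n) (leq_maxl _ _).
have h2 := hu (maxn N n) (leq_maxr _ _).
have := ler_normD (l - u (maxn N n)) (u (maxn N n) - p).
rewrite addrA subrK; lra.
Qed.

Definition Eset (T : Type) (R : realType) (X : normedModType R) (u v : nat -> T -> X)
  (n : nat) (p q : X) (del : R) : set T :=
  [set t | [/\ u n t = p, v n t = q &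
     forall m, (n <= m)%N -> `|u m t - p| < del /\ `|v m t - q| < del]].

Lemma Eset_measurable d (T : measurableType d) (R : realType) (X : normedModType R)
  (u v : nat -> T -> X) n p q del :
  (forall n, simple_fun (u n)) -> (forall n, simple_fun (v n)) ->
  measurable (Eset u v n p q del).
Proof.
move=> su sv.
have -> : Eset u v n p q del = u n @^-1` [set p] `&` v n @^-1` [set q] `&`
   \bigcap_(m in [set m | (n <= m)%N])
     (u m @^-1` [set x | `|x - p| < del] `&` v m @^-1` [set x | `|x - q| < del]).
  rewrite predeqE => t; split.
    by move=> [h1 h2 h3]; split; [split|move=> m /h3].
  by move=> [[h1 h2] h3]; split => // m /h3.
apply: measurableI; first by apply: measurableI; apply: simple_pre.
apply: bigcap_measurable; first by exists n => /=.
by move=> m _; apply: measurableI; apply: simple_pre.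
Qed.

Lemma negS d (T : measurableType d) (R : realType) (mu : {measure set T -> \bar R})
  (A B : set T) : mu.-negligible A -> B `<=` A -> mu.-negligible B.
Proof. by move=> h s; exact: (negligibleS s h). Qed.

Lemma findE d (T : measurableType d) (R : realType) (mu : {measure set T -> \bar R})
  (X : normedModType R) (u v : nat -> T -> X) (f1 f2 : T -> X) (del : R) :
  0 < del -> (forall n, simple_fun (u n)) -> (forall n, simple_fun (v n)) ->
  {ae mu, forall t, u n t @[n --> \oo] --> f1 t} ->
  {ae mu, forall t, v n t @[n --> \oo] --> f2 t} ->
  ~ {ae mu, forall t, `|f1 t| <= 1 - del} ->
  exists n p q, ~ mu.-negligible (Eset u v n p q del) /\ 1 - 2 * del < `|p|.
Proof.
move=> del0 su sv cu0 cv0 nf.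
have cu := ae_and cu0 cv0.
apply/not_existsP => H; apply: nf.
have H' n p q : 1 - 2 * del < `|p| -> mu.-negligible (Eset u v n p q del).
  move=> hp; have [//|hn] := pselect (mu.-negligible (Eset u v n p q del)).
  exfalso; apply: (H n); exists p; exists q; split => //.
pose s1 n := projT1 (cid ((iffLR (finite_seqP _)) (su n).1)).
pose s2 n := projT1 (cid ((iffLR (finite_seqP _)) (sv n).1)).
have s1P n : range (u n) = [set` s1 n] := projT2 (cid ((iffLR (finite_seqP _)) (su n).1)).
have s2P n : range (v n) = [set` s2 n] := projT2 (cid ((iffLR (finite_seqP _)) (sv n).1)).
pose F n i j := Eset u v n (nth 0 (s1 n) i) (nth 0 (s2 n) j) del `&`
   [set _ | 1 - 2 * del < `|nth 0 (s1 n) i|].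
have Fneg n i j : mu.-negligible (F n i j).
  have [hp|hp] := pselect (1 - 2 * del < `|nth 0 (s1 n) i|).
    apply: (negS (H' n _ (nth 0 (s2 n) j) hp)); rewrite /F => t. by case.
  by apply: (negS (negligible_set0 mu)); rewrite /F => t [_ /= ?].
have Un : mu.-negligible (\bigcup_n \bigcup_i \bigcup_j F n i j).
  by apply: negligible_bigcup => n; apply: negligible_bigcup => i;
    apply: negligible_bigcup => j; exact: Fneg.
move/aeE: cu => cu; apply/aeE; apply: (negS (negligibleU cu Un)).
move=> t /= nt.
have [[ct ct2]|nct] := pselect (u n t @[n --> \oo] --> f1 t /\ v n t @[n --> \oo] --> f2 t); last by left.
right.
have d2 : 0 < del / 2 by rewrite divr_gt0.
have [N1 HN1] := cvg_ev ct d2.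
have [N2 HN2] := cvg_ev ct2 d2.
pose N := maxn N1 N2.
have HN m : (N <= m)%N -> `|f1 t - u m t| < del / 2 /\ `|f2 t - v m t| < del / 2.
  move=> Nm; split; [apply: HN1|apply: HN2]; apply: leq_trans Nm; 
    [exact: leq_maxl|exact: leq_maxr].
have uN1 : [set` s1 N] (u N t) by rewrite -s1P; exists t.
have vN1 : [set` s2 N] (v N t) by rewrite -s2P; exists t.
have {}uN1 : u N t \in s1 N := uN1.
have {}vN1 : v N t \in s2 N := vN1.
exists N => //; exists (index (u N t) (s1 N)) => //; exists (index (v N t) (s2 N)) => //.
rewrite /F !nth_index //; split; last first.
  have := (HN N (leqnn N)).1; move/negP: nt; rewrite -ltNge => nt.
  have := ler_normD (u N t) (f1 t - u N t); rewrite addrC subrK.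
  rewrite /=; lra.
split => // m Nm.
have [a1 b1] := HN m Nm; have [a2 b2] := HN N (leqnn N).
have e1 := ler_normD (u m t - f1 t) (f1 t - u N t).
have e2 := ler_normD (v m t - f2 t) (f2 t - v N t).
rewrite addrA subrK distrC in e1; rewrite addrA subrK distrC in e2.
rewrite -(distrC (f1 t)) in e1; rewrite -(distrC (f2 t)) in e2.
rewrite (distrC (u m t)) (distrC (v m t)); split; lra.
Qed.
Lemma num_cle (R : realType) (c eta : R) : c * (1 + eta) = 1 -> 0 < c -> 0 < eta -> c <= 1.
Proof. move=> h c0 e0; nra. Qed.
Lemma num_close (R : realType) (c eta n : R) : c * (1 + eta) = 1 -> c <= 1 -> 0 <= n -> n < 1 + eta -> (1 - c) * n <= eta.
Proof. move=> h c1 n0 hn; nra. Qed.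
Lemma num_nc (R : realType) (c eta n : R) : c * (1 + eta) = 1 -> 0 < c -> n < 1 + eta -> c * n <= 1.
Proof. move=> h c0 hn; nra. Qed.
Lemma num_sl (R : realType) (c e eps P : R) : c * (1 + e / 16) = 1 -> 0 < c -> 0 < e -> e <= eps -> e <= 1 ->
  1 - 7 * (e / 16) < P -> 1 - eps < c * P.
Proof. move=> h c0 e0 ee e1 hP; nra. Qed.

Lemma num_A (R : realType) (e P : R) : 0 < e -> e <= 1 -> 1 - 2 * (e / 16) < P ->
  1 - e < P * (1 - e / 8) - e / 16 - 2 * (e / 8).
Proof. move=> e0 e1 hP; nra. Qed.

Lemma num_B (R : realType) (e lam s : R) : 0 < e -> e <= 1 -> 0 <= lam -> lam < 1 + 2 * (e / 16) ->
  0 <= s -> s < 2 + e / 8 -> lam * s + `|1 - lam| * 2 + 2 * (e / 16) < 2 + e.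
Proof.
move=> e0 e1 l0 l1 s0 s1; have [h|h] := leP lam 1.
  rewrite ger0_norm; last by lra.
  nra.
rewrite ler0_norm; last by lra.
nra.
Qed.

Lemma ne_ex d (T : measurableType d) (R : realType) (mu : {measure set T -> \bar R})
  (E : set T) (Q : T -> Prop) :
  ~ mu.-negligible E -> {ae mu, forall t, Q t} -> exists t, E t /\ Q t.
Proof.
move=> nE hQ.
have nP : ~ {ae mu, forall t, ~ E t}.
  move=> /aeE h; apply: nE; apply: (negS h) => t Et /=; exact.
have [t [h1 h2]] := ae_ex nP hQ; exists t; split => //; exact/not_notP.
Qed.

Lemma scale_bound (R : realType) (X : normedModType R) (q qh y : X) (lam : R) :
  q = lam *: qh -> 0 <= lam -> `|q - y| <= lam * `|qh - y| + `|1 - lam| * `|y|.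
Proof.
move=> -> l0.
have -> : lam *: qh - y = lam *: (qh - y) + (lam - 1) *: y.
  by rewrite scalerBr scalerBl scale1r addrA subrK.
apply: (le_trans (ler_normD _ _)); rewrite !normrZ (ger0_norm l0) (distrC lam 1).
by [].
Qed.
Lemma dir2 (R : realType) (X : completeNormedModType R)
  (d : measure_display) (T : measurableType d)
  (mu : {measure set T -> \bar R}) :
  (0 < mu setT)%E -> star2_Linfty mu X -> star2_normed X.
Proof.
move=> mu0 HL z1 z2 _ _ n1 n2 eps eps0.
pose e := Num.min eps 1.
have e0 : 0 < e by rewrite lt_min eps0 ltr01.
have e1 : e <= 1 by rewrite ge_min lexx orbT.
have ee : e <= eps by rewrite ge_min lexx.
pose f1 := fun _ : T => z1; pose f2 := fun _ : T => z2.
have Df1 : Linfty_dom mu f1 by exact: dom_cst.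
have Df2 : Linfty_dom mu f2 by exact: dom_cst.
have nf1 : ess_norm mu f1 = 1 by rewrite ess_norm_cst.
have nf2 : ess_norm mu f2 = 1 by rewrite ess_norm_cst.
have e8 : 0 < e / 8 by rewrite divr_gt0.
have [Phi [sph sl1 dsum]] := HL f1 f2 Df1 Df2 nf1 nf2 (e / 8) e8.
pose eta := e / 16.
have eta0 : 0 < eta by rewrite divr_gt0.
have etaE : eta = e / 16 by [].
pose a := dist (@ess_norm _ _ _ mu X) f2 (slice (@Linfty_dom _ _ _ mu X) (@ess_norm _ _ _ mu X) Phi (e / 8)).
pose b := dist (@ess_norm _ _ _ mu X) f2 (nslice (@Linfty_dom _ _ _ mu X) (@ess_norm _ _ _ mu X) Phi (e / 8)).
have [h slh hh] : exists2 h, slice (@Linfty_dom _ _ _ mu X) (@ess_norm _ _ _ mu X) Phi (e / 8) h &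
    ess_norm mu (f2 - h) < a + eta.
  by apply: dist_lt; [exists f1|rewrite ltrDl].
have [k' slk hk] : exists2 k, nslice (@Linfty_dom _ _ _ mu X) (@ess_norm _ _ _ mu X) Phi (e / 8) k &
    ess_norm mu (f2 - k) < b + eta.
  by apply: dist_lt; [exists (- f1); exists f1|rewrite ltrDl].
case: slk => k slk <- in hk.
case: slh => Dh nh Ph; case: slk => Dk nk Pk; case: sl1 => _ _ P1.
have lin := sph; case: lin => lin _ _.
have DZ : forall (c : R) (x : T -> X), Linfty_dom mu x -> Linfty_dom mu (c *: x).
  by move=> c x Dx; have := dom_lin c 0 Dx Dx; rewrite scale0r addr0.
have Pb : forall x, Linfty_dom mu x -> `|Phi x| <= ess_norm mu x.
  apply: sphere_le sph => //.
    by move=> c x [_ bx]; exact: ess_norm_scale.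
  by move=> x _; exact: ess_norm_ge0.
pose g := 3^-1 *: f1 + 3^-1 *: (1 *: h + 1 *: k).
have Dhk : Linfty_dom mu (1 *: h + 1 *: k) by exact: dom_lin.
have Dg : Linfty_dom mu g by exact: dom_lin.
have Pg : Phi g = 3^-1 * Phi f1 + 3^-1 * (Phi h + Phi k).
  by rewrite /g lin // lin // !mul1r.
have ng : 1 - e / 8 < ess_norm mu g.
  apply: (lt_le_trans _ (Pb g Dg)); apply: (lt_le_trans _ (ler_norm _)).
  rewrite Pg; lra.
have ng' : ~ {ae mu, forall t, `|g t| <= 1 - e / 8}.
  by apply: ess_norm_gt => //; lra.
have bsub : forall x y : T -> X, Linfty_dom mu x -> Linfty_dom mu y -> ess_bounded mu (x - y).
  move=> x y [_ bx] [_ [M by']]; have := ess_bounded_lin 1 (-1) bx (ex_intro _ M by').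
  by rewrite scale1r scaleN1r.
have a1 := ess_norm_lt (bsub _ _ Df2 Dh) hh.
have hk' : ess_norm mu (f2 - (-1) *: k) < b + eta by rewrite scaleN1r.
have a2 := ess_norm_lt (bsub _ _ Df2 (DZ (-1) _ Dk)) hk'.
have h3 : ess_norm mu h < 1 + eta by lra.
have a3 := ess_norm_lt Dh.2 h3.
have h4 : ess_norm mu k < 1 + eta by lra.
have a4 := ess_norm_lt Dk.2 h4.
have [t [gt [[[t1 t2] t3] t4]]] := ae_ex ng' (ae_and (ae_and (ae_and a1 a2) a3) a4).
have {t1}t1 : `|z2 - h t| < a + eta := t1.
have {t2}t2 : `|z2 - (-1) *: k t| < b + eta := t2.
have {gt}gt : ~ `|3^-1 *: z1 + 3^-1 *: (1 *: h t + 1 *: k t)| <= 1 - e / 8 := gt.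
rewrite scaleN1r opprK in t2; rewrite !scale1r in gt.
pose x0 := z1 + (h t + k t).
have nx0 : 3 - 3 * (e / 8) < `|x0|.
  have -> : x0 = 3 *: (3^-1 *: z1 + 3^-1 *: (h t + k t)).
    by rewrite -scalerDr scalerA mulfV ?scale1r.
  rewrite normrZ gtr0_norm //; move/negP: gt; rewrite -ltNge; lra.
have [psi [plin pb px0]] := @hahn_banach R X setT (fun x => `|x|)
  (fun _ _ _ _ _ _ => I) (fun x y _ _ => ler_normD x y) (fun a x _ => normrZ a x) x0 I.
have pb' : forall v, `|psi v| <= `|v| by move=> v; exact: pb.
have psum : psi x0 = psi z1 + psi (h t) + psi (k t).
  have := plin 1 1 z1 (h t + k t) I I; rewrite !scale1r !mul1r => ->.
  have := plin 1 1 (h t) (k t) I I; rewrite !scale1r !mul1r => ->.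
  by rewrite addrA.
have sph' : dual_sphere [set: X] (fun x => `|x|) psi.
  apply: (@mk_sphere _ _ _ _ _ x0) => //.
    by move=> c v _; exact: normrZ.
  lra.
have b1 := pb' z1; have b2 := pb' (h t); have b3 := pb' (k t).
have n1' := ler_norm (psi z1); have n2' := ler_norm (psi (h t)); have n3' := ler_norm (psi (k t)).
pose c := (1 + eta)^-1.
have c1 : c * (1 + eta) = 1 by rewrite mulVf // gt_eqF //; lra.
have c0 : 0 < c by rewrite invr_gt0; lra.
have cle : c <= 1 by apply: (num_cle c1).
have slin : forall v, psi (c *: v) = c * psi v.
  by move=> v; have := plin c 0 v v I I; rewrite scale0r addr0 mul0r addr0.
have close : forall v : X, `|v| < 1 + eta -> `|v - c *: v| <= eta.
  move=> v hv; rewrite -{1}(scale1r v) -scalerBl normrZ ger0_norm; last by lra.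
  exact: num_close c1 cle (normr_ge0 v) hv.
have psh : 1 - 7 * (e / 16) < psi (h t) by lra.
have psk : 1 - 7 * (e / 16) < psi (k t) by lra.
have nhc : `|c *: h t| <= 1 by rewrite normrZ gtr0_norm //; exact: num_nc c1 c0 t3.
have nkc : `|c *: k t| <= 1 by rewrite normrZ gtr0_norm //; exact: num_nc c1 c0 t4.
have sly : slice [set: X] (fun x => `|x|) psi eps (c *: h t).
  by split => //; rewrite slin; exact: num_sl c1 c0 e0 ee e1 psh.
have slw : slice [set: X] (fun x => `|x|) psi eps (c *: k t).
  by split => //; rewrite slin; exact: num_sl c1 c0 e0 ee e1 psk.
exists psi; split => //.
  by split => //; [rewrite n1|lra].
apply: (@le_lt_trans _ _ (`|z2 - c *: h t| + `|z2 - - (c *: k t)|)).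
  apply: lerD; apply: dist_le => //.
  by exists (c *: k t).
have := close _ t3; have := close _ t4.
have -> : z2 - c *: h t = (z2 - h t) + (h t - c *: h t) by rewrite addrA subrK.
have -> : z2 - - (c *: k t) = (z2 + k t) - (k t - c *: k t) by rewrite opprK opprB addrA addrAC addrK.
have := ler_normD (z2 - h t) (h t - c *: h t).
have := ler_normB (z2 + k t) (k t - c *: k t).
have : a + b < 2 + e / 8 by [].
lra.
Qed.
Lemma dir1 (R : realType) (X : completeNormedModType R)
  (d : measure_display) (T : measurableType d)
  (mu : {measure set T -> \bar R}) :
  (0 < mu setT)%E -> star2_normed X -> star2_Linfty mu X.
Proof.
move=> mu0 HX f1 f2 Df1 Df2 n1 n2 eps eps0.
pose e := Num.min eps 1.
have e0 : 0 < e by rewrite lt_min eps0 ltr01.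
have e1 : e <= 1 by rewrite ge_min lexx orbT.
have ee : e <= eps by rewrite ge_min lexx.
pose del := e / 16; have delE : del = e / 16 by [].
pose ep := e / 8; have epE : ep = e / 8 by [].
have del0 : 0 < del by rewrite divr_gt0.
have ep0 : 0 < ep by rewrite divr_gt0.
have [[u [su cu]] bf1] := Df1.
have [[v [sv cv]] bf2] := Df2.
have nf : ~ {ae mu, forall t, `|f1 t| <= 1 - del}.
  by apply: ess_norm_gt; rewrite ?n1; lra.
have [n [p [q [nE pbig]]]] := findE del0 su sv cu cv nf.
pose E := Eset u v n p q del.
have mE : measurable E by exact: Eset_measurable.
have PE : {ae mu, forall t, E t -> `|f1 t - p| <= del /\ `|f2 t - q| <= del}.
  apply: (ae_imp (ae_and cu cv)) => t [c1 c2] [_ _ hm]; split.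
    by apply: (lim_ball c1) => m /hm [].
  by apply: (lim_ball c2) => m /hm [].
have a2 : {ae mu, forall t, `|f2 t| < 1 + del}.
  by apply: ess_norm_lt => //; rewrite n2; lra.
have [t0 [Et0 [PEt ht0]]] := ne_ex nE (ae_and PE a2).
have [_ hq0] := PEt Et0.
have qb : `|q| < 1 + 2 * del.
  have := ler_normD (f2 t0) (q - f2 t0); rewrite addrC subrK distrC; lra.
have p0 : 0 < `|p| by lra.
pose ph := `|p|^-1 *: p.
have nph : `|ph| = 1 by rewrite normrZ normfV normr_id mulVf ?gt_eqF.
pose qh := if q == 0 then ph else `|q|^-1 *: q.
have nqh : `|qh| = 1.
  rewrite /qh; case: eqP => // /eqP q0.
  by rewrite normrZ normfV normr_id mulVf ?normr_eq0.
have qqh : q = `|q| *: qh.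
  rewrite /qh; case: eqP => [->|/eqP q0]; first by rewrite normr0 scale0r.
  by rewrite scalerA mulfV ?normr_eq0 ?scale1r.
have [xs [sphx slx dsx]] := HX ph qh I I nph nqh ep ep0.
pose d1 := dist (fun x : X => `|x|) qh (slice [set: X] (fun x : X => `|x|) xs ep).
pose d2 := dist (fun x : X => `|x|) qh (nslice [set: X] (fun x : X => `|x|) xs ep).
pose r := (2 + ep - (d1 + d2)) / 2.
have r0 : 0 < r by rewrite divr_gt0 // subr_gt0.
have [y sly hy] : exists2 y, slice [set: X] (fun x : X => `|x|) xs ep y & `|qh - y| < d1 + r.
  by apply: dist_lt; [exists ph|rewrite ltrDl].
have [w' slw' hw'] : exists2 w, nslice [set: X] (fun x : X => `|x|) xs ep w & `|qh - w| < d2 + r.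
  by apply: dist_lt; [exists (- ph); exists ph|rewrite ltrDl].
case: slw' => w slw weq; rewrite -weq opprK in hw'.
have syw : `|qh - y| + `|qh + w| < 2 + ep.
  have : d1 + r + (d2 + r) = 2 + ep by rewrite /r; field.
  lra.
have xlin : lin_on [set: X] xs by case: sphx.
have xb : forall z, `|xs z| <= `|z|.
  move=> z; exact: (@sphere_le R X setT (fun x => `|x|) xs (fun _ _ _ => I)
    (fun c x _ => normrZ c x) (fun x _ => normr_ge0 x) sphx z I).
have xsc : forall c z, xs (c *: z) = c * xs z by move=> c z; exact: (@lin_scale _ _ _ _ c z xlin I).
have xadd : forall z1 z2, xs (z1 + z2) = xs z1 + xs z2.
  by move=> z1 z2; have := xlin 1 1 z1 z2 I I; rewrite !scale1r !mul1r.
case: slx => _ _ xph; case: sly => _ ny xy; case: slw => _ nw xw.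
have xp : xs p = `|p| * xs ph by rewrite -xsc /ph scalerA mulfV ?gt_eqF ?scale1r.
have qy := scale_bound y qqh (normr_ge0 q).
have qw := scale_bound (- w) qqh (normr_ge0 q).
rewrite opprK normrN in qw.
have ab0 := normr_ge0 (1 - `|q|).
have qy' : `|1 - `|q| | * `|y| <= `|1 - `|q| |.
  by rewrite -[X in _ <= X]mulr1; apply: ler_wpM2l.
have qw' : `|1 - `|q| | * `|w| <= `|1 - `|q| |.
  by rewrite -[X in _ <= X]mulr1; apply: ler_wpM2l.
have numB := num_B e0 e1 (normr_ge0 q) (_ : `|q| < 1 + 2 * (e / 16))
   (addr_ge0 (normr_ge0 (qh - y)) (normr_ge0 (qh + w))) (_ : _ < 2 + e / 8).
have {numB}numB := numB qb syw.
have DZ : forall (c : R) (x : T -> X), Linfty_dom mu x -> Linfty_dom mu (c *: x).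
  by move=> c x Dx; have := dom_lin c 0 Dx Dx; rewrite scale0r addr0.
pose h := pw E y f2.
pose k := pw E w ((-1) *: f2).
have Dh : Linfty_dom mu h by exact: dom_pw.
have Dk : Linfty_dom mu k by apply: dom_pw => //; exact: DZ.
have B1 : ess_norm mu (f2 - h) <= `|q - y| + del.
  apply: ess_norm_le; first by have := normr_ge0 (q - y); lra.
  apply: (ae_imp PE) => t Pt.
  have -> : `|(f2 - h) t| = `|f2 t - h t| by [].
  rewrite /h /pw; case: asboolP => Et; last by rewrite subrr normr0; have := normr_ge0 (q - y); lra.
  have [_ h2] := Pt Et.
  have := ler_normD (f2 t - q) (q - y); rewrite addrA subrK; lra.
have B2 : ess_norm mu (f2 - - k) <= `|q + w| + del.
  apply: ess_norm_le; first by have := normr_ge0 (q + w); lra.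
  apply: (ae_imp PE) => t Pt.
  have -> : `|(f2 - - k) t| = `|f2 t + k t| by rewrite /= opprK.
  rewrite /k /pw; case: asboolP => Et; last first.
    by rewrite scaleN1r subrr normr0; have := normr_ge0 (q + w); lra.
  have [_ h2] := Pt Et.
  have := ler_normD (f2 t - q) (q + w); rewrite addrA subrK; lra.
have Bh : ess_norm mu h <= 1.
  apply/ler_addgt0Pr => r1 r10; apply: ess_norm_le; first by lra.
  have : ess_norm mu f2 < 1 + r1 by rewrite n2 ltrDl.
  move/(ess_norm_lt bf2); move/(ae_imp) => H; apply: H => t ht.
  by rewrite /h /pw; case: asboolP => _; lra.
have Bk : ess_norm mu k <= 1.
  apply/ler_addgt0Pr => r1 r10; apply: ess_norm_le; first by lra.
  have : ess_norm mu f2 < 1 + r1 by rewrite n2 ltrDl.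
  move/(ess_norm_lt bf2); move/(ae_imp) => H; apply: H => t ht.
  by rewrite /k /pw; case: asboolP => _; rewrite ?scaleN1r ?normrN; lra.
pose g := 3^-1 *: f1 + 3^-1 *: (1 *: h + 1 *: k).
have Dhk : Linfty_dom mu (1 *: h + 1 *: k) by exact: dom_lin.
have Dg : Linfty_dom mu g by exact: dom_lin.
pose m := (`|p| * (1 - ep) - del + 2 * (1 - ep)) / 3.
have mE3 : m * 3 = `|p| * (1 - ep) - del + 2 * (1 - ep) by rewrite /m mulfVK.
have xpp : `|p| * (1 - ep) < xs p by rewrite xp ltr_pM2l.
have xlow : forall z, - `|z| <= xs z.
  by move=> z; have := xb z; rewrite ler_norml => /andP[].
have mg : m <= ess_norm mu g.
  rewrite leNgt; apply/negP => lt.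
  have ag := ess_norm_lt Dg.2 lt.
  have [t [Et [Pt gt]]] := ne_ex nE (ae_and PE ag).
  have [h1 _] := Pt Et.
  have hE : h t = y by rewrite /h /pw; case: asboolP.
  have kE : k t = w by rewrite /k /pw; case: asboolP.
  have gE : g t = 3^-1 *: f1 t + 3^-1 *: (1 *: h t + 1 *: k t) by [].
  rewrite gE hE kE !scale1r in gt.
  have A : xs p - del <= xs (f1 t).
    have e3 : f1 t = p + (f1 t - p) by rewrite addrCA subrr addr0.
    rewrite [in X in _ <= X]e3 xadd; have := xlow (f1 t - p); lra.
  have B := le_trans (ler_norm _) (xb (3^-1 *: f1 t + 3^-1 *: (y + w))).
  rewrite xadd !xsc xadd in B.
  clear -gt A B xpp xy xw mE3.
  lra.
have DL : forall (a b : R) (x y : T -> X), Linfty_dom mu x -> Linfty_dom mu y -> Linfty_dom mu (a *: x + b *: y).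
  by move=> a b x y' Dx Dy; exact: dom_lin.
have [Phi [plin pb pg]] := @hahn_banach R (T -> X) (@Linfty_dom _ _ _ mu X) (@ess_norm _ _ _ mu X) DL
  (fun x y Dx Dy => ess_norm_add Dx.2 Dy.2) (fun a x Dx => ess_norm_scale a Dx.2) g Dg.
have nA := num_A e0 e1 (_ : 1 - 2 * (e / 16) < `|p|).
have {}nA := nA pbig.
have mpos : 0 < m by rewrite -epE -delE in nA; lra.
have sph : dual_sphere (@Linfty_dom _ _ _ mu X) (@ess_norm _ _ _ mu X) Phi.
  apply: (@mk_sphere _ _ _ _ _ g) => //; first by move=> a x Dx; exact: ess_norm_scale a Dx.2.
  exact: lt_le_trans mg.
have Pg : Phi g = 3^-1 * Phi f1 + 3^-1 * (Phi h + Phi k).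
  by rewrite /g plin // plin // !mul1r.
have b1 := le_trans (ler_norm _) (pb _ Df1); rewrite n1 in b1.
have b2 := le_trans (ler_norm _) (pb _ Dh).
have b3 := le_trans (ler_norm _) (pb _ Dk).
rewrite -epE -delE in nA.
have Pf1 : 1 - eps < Phi f1 by lra.
have Ph : 1 - eps < Phi h by lra.
have Pk : 1 - eps < Phi k by lra.
exists Phi; split => //.
  by split => //; rewrite n1.
apply: (@le_lt_trans _ _ (ess_norm mu (f2 - h) + ess_norm mu (f2 - - k))).
  have slh : slice (@Linfty_dom _ _ _ mu X) (@ess_norm _ _ _ mu X) Phi eps h.
    by split => //; lra.
  have slk : nslice (@Linfty_dom _ _ _ mu X) (@ess_norm _ _ _ mu X) Phi eps (- k).
    by exists k => //; split => //; lra.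
  apply: lerD.
    by apply: dist_le slh => s' _; exact: ess_norm_ge0.
  by apply: dist_le slk => s' _; exact: ess_norm_ge0.
rewrite -delE in numB.
lra.
Qed.

Unset Implicit Arguments.

Theorem theorem2p2 (R : realType) (X : completeNormedModType R)
  (d : measure_display) (T : measurableType d)
  (mu : {measure set T -> \bar R}) :
  sigma_finite setT mu -> (0 < mu setT)%E ->
  (star2_normed X <-> star2_Linfty mu X).
Proof.
move=> _ mu0; split; [exact: dir1|exact: dir2].
Qed.
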